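(* There exists a function $g$ such that, for all positive integers $t$ and $q$, if $M$ is a matroid with the $(t,2t)$-property and $|E(M)| \ge g(t,q)$, then for some $M' \in \{M,M^*\}$, the matroid $M'$ has $t-1$ pairwise disjoint cocircuits $C_1^*, C_2^*, \dotsc, C_{t-1}^*$, and there is some $Z \subseteq E(M')-\bigcup_{i=1}^{t-1}C_i^*$ such that (1) $r_{M'}(Z) \ge q$, and (2) for each $z \in Z$, there exists an element $z'\in Z-\{z\}$ and, for each $i\in\{1,\dots,t-1\}$, a pair of elements $\{x_i,x_i'\}\subseteq C_i^*$, such that $\{z,z'\} \cup \bigcup_{i=1}^{t-1}\{x_i,x_i'\}$ is a circuit of $M'$.
   Context: A matroid $M$ has the $(t,2t)$-property if every $t$-element subset of $E(M)$ is contained in both a $2t$-element circuit and a $2t$-element cocircuit of $M$. $M^*$ denotes the dual matroid and $r_{M'}$ the rank function of $M'$. *)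

(* Defs.v *)
(* Matroids on a finite ground set T (E(M) = the whole type T),
   given by their independence predicate. *)
From mathcomp Require Import all_boot.
Set Implicit Arguments. Unset Strict Implicit. Unset Printing Implicit Defensive.

Section Matroid.
Variable T : finType.
Implicit Types (I : {set T} -> bool) (A B C X Y : {set T}).

Definition is_matroid I : Prop :=
  [/\ I set0,
      (forall A B, B \subset A -> I A -> I B) &
      (forall A B, I A -> I B -> #|A| < #|B| ->
         exists2 x, x \in B :\: A & I (x |: A))].

Definition is_basis I B : bool := maxset I B.

Definition is_circuit I C : bool := minset (fun X => ~~ I X) C.

Definition dual I : {set T} -> bool :=
  fun X => [exists B, is_basis I B && [disjoint X & B]].

Definition is_cocircuit I C : bool := is_circuit (dual I) C.

Definition rank I X : nat := \max_(Y : {set T} | (Y \subset X) && I Y) #|Y|.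

Definition t2t_property I (t : nat) : Prop :=
  forall X, #|X| = t ->
    (exists2 C, is_circuit I C & (X \subset C) && (#|C| == 2 * t)) /\
    (exists2 C, is_cocircuit I C & (X \subset C) && (#|C| == 2 * t)).

End Matroid.

(* Main.v *)
Require Import Defs.
From mathcomp Require Import all_boot zify.
From Stdlib Require Import FunctionalExtensionality ClassicalEpsilon.
Set Implicit Arguments. Unset Strict Implicit. Unset Printing Implicit Defensive.

Lemma disjP (T : finType) (A B : {set T}) :
  reflect (forall x, x \in A -> x \in B -> False) [disjoint A & B].
Proof.
rewrite -setI_eq0; apply: (iffP eqP) => [E x xA xB | H].
  by move: E => /setP/(_ x); rewrite !inE xA xB.
by apply/setP => x; rewrite !inE; apply/negP => /andP[]; apply: H.
Qed.
Arguments disjP {T A B}.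

Section Basics.
Variable T : finType.
Variable I : {set T} -> bool.
Hypothesis HI : is_matroid I.
Implicit Types (A B C D J L N S U X Y : {set T}).

Lemma I0 : I set0. Proof. by case: HI. Qed.
Lemma Isub A B : B \subset A -> I A -> I B. Proof. by case: HI => _ H _; apply: H. Qed.
Lemma Iaug A B : I A -> I B -> #|A| < #|B| -> exists2 x, x \in B :\: A & I (x |: A).
Proof. by case: HI => _ _ H; apply: H. Qed.

Definition maxin S X := maxset (fun Y => I Y && (Y \subset S)) X.

Lemma maxinI S X : maxin S X -> I X.
Proof. by move/maxsetp/andP=> []. Qed.
Lemma maxinS S X : maxin S X -> X \subset S.
Proof. by move/maxsetp/andP=> []. Qed.

Lemma maxin_nogrow S X x : maxin S X -> x \in S -> I (x |: X) -> x \in X.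
Proof.
move=> mX xS Ix.
have E : x |: X = X.
  apply: (maxsetsup mX); last exact: subsetUr.
  by rewrite Ix /= subUset sub1set xS (maxinS mX).
by rewrite -E setU11.
Qed.

Lemma maxin_card S X Y : maxin S X -> maxin S Y -> #|X| = #|Y|.
Proof.
wlog: X Y / #|X| <= #|Y|.
  by move=> H mX mY; case: (leqP #|X| #|Y|) => h; [|apply/esym]; apply: H => //; apply: ltnW.
move=> le mX mY; apply/eqP; rewrite eqn_leq le /=; rewrite leqNgt; apply/negP=> lt.
have [x /setDP[xY xX] Ix] := Iaug (maxinI mX) (maxinI mY) lt.
have xS : x \in S by apply: (subsetP (maxinS mY)).
by rewrite (maxin_nogrow mX xS Ix) in xX.
Qed.

Lemma maxin_ext S X : I X -> X \subset S -> exists2 L, maxin S L & X \subset L.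
Proof.
move=> IX XS.
have PX : (fun Y => I Y && (Y \subset S)) X by rewrite /= IX XS.
have [L mL XL] := @maxset_exists _ (fun Y => I Y && (Y \subset S)) X PX.
by exists L.
Qed.

Lemma basis_maxin B : is_basis I B = maxin setT B.
Proof. by apply: maxset_eq => Y; rewrite subsetT andbT. Qed.

Lemma basisI B : is_basis I B -> I B.
Proof. exact: maxsetp. Qed.

Lemma basis_card B B' : is_basis I B -> is_basis I B' -> #|B| = #|B'|.
Proof. rewrite !basis_maxin; exact: maxin_card. Qed.

Lemma exists_basis : exists B, is_basis I B.
Proof. by have [B mB _] := @maxset_exists _ (fun Y => I Y) set0 I0; exists B. Qed.

Lemma basis_ext X : I X -> exists2 B, is_basis I B & X \subset B.
Proof. by move=> IX; have [B mB XB] := @maxset_exists _ (fun Y => I Y) X IX; exists B. Qed.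

Lemma basis_of_card B X : is_basis I B -> I X -> #|B| <= #|X| -> is_basis I X.
Proof.
move=> bB IX le; apply/maxsetP; split=> // Y IY XY.
apply/eqP; rewrite eq_sym eqEcard XY /= leqNgt; apply/negP=> lt.
have [y /setDP[yY yB] Iy] := Iaug (basisI bB) IY (leq_ltn_trans le lt).
have := maxsetsup bB Iy (subsetUr _ _) => /setP/(_ y); rewrite setU11 => /esym.
by rewrite (negbTE yB).
Qed.

Lemma maxin_basis S B L : is_basis I B -> B \subset S -> maxin S L -> is_basis I L.
Proof.
move=> bB BS mL; apply: (basis_of_card bB (maxinI mL)).
suff mB : maxin S B by rewrite (maxin_card mB mL).
apply/maxsetP; split; first by rewrite (basisI bB) BS.
by move=> Y /andP[IY _] BY; apply: (maxsetsup bB IY BY).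
Qed.

Lemma circuit_dep C : is_circuit I C -> ~~ I C.
Proof. exact: minsetp. Qed.

Lemma circuit_sub C X : is_circuit I C -> X \subset C -> X != C -> I X.
Proof.
move=> cC XC neq; apply/negPn/negP => dX.
by move: neq; rewrite (minsetinf cC dX XC) eqxx.
Qed.

Lemma circuit_del C e : is_circuit I C -> e \in C -> I (C :\ e).
Proof.
move=> cC eC; apply: circuit_sub cC (subsetDl _ _) _.
by apply/eqP => /setP/(_ e); rewrite !inE eqxx eC.
Qed.

Lemma circuit_incomp C C' : is_circuit I C -> is_circuit I C' -> C \subset C' -> C = C'.
Proof. by move=> cC cC' CC'; apply: (minsetinf cC' (circuit_dep cC) CC'). Qed.

Lemma circuit_neq0 C : is_circuit I C -> C != set0.
Proof. by move=> cC; apply/eqP=> C0; move: (circuit_dep cC); rewrite C0 I0. Qed.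

Lemma dep_circuit X : ~~ I X -> exists2 C, is_circuit I C & C \subset X.
Proof.
move=> dX; have [C mC CX] := @minset_exists _ (fun Y => ~~ I Y) X dX.
by exists C.
Qed.

Lemma dep_sup A B : A \subset B -> ~~ I A -> ~~ I B.
Proof. by move=> AB; apply: contra; apply: Isub. Qed.

Lemma circuit_elim C1 C2 e : is_circuit I C1 -> is_circuit I C2 -> C1 != C2 ->
  e \in C1 -> e \in C2 -> exists2 D, is_circuit I D & D \subset (C1 :|: C2) :\ e.
Proof.
move=> c1 c2 neq e1 e2; apply: dep_circuit; apply/negP => Id.
have [f fC1 fC2] : exists2 f, f \in C1 & f \notin C2.
  apply/exists_inP; rewrite -(negbK [exists _ in _, _]) negb_exists_in; apply/negP => /forall_inP H.
  have s12 : C1 \subset C2 by apply/subsetP => x /H /negPn.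
  by move: neq; rewrite (circuit_incomp c1 c2 s12) eqxx.
have [L mL sL] := maxin_ext (circuit_del c1 fC1) (subset_trans (subsetDl C1 [set f]) (subsetUl C1 C2)).
have fL : f \notin L.
  apply/negP => fL; have : C1 \subset L.
    apply/subsetP => x xC; case: (eqVneq x f) => [->//|xf].
    by apply: (subsetP sL); rewrite !inE xf.
  by move=> /dep_sup /(_ (circuit_dep c1)); rewrite (maxinI mL).
have [g gC2 gL] : exists2 g, g \in C2 & g \notin L.
  apply/exists_inP; rewrite -(negbK [exists _ in _, _]) negb_exists_in; apply/negP => /forall_inP H.
  have : C2 \subset L by apply/subsetP => x /H /negPn.
  by move=> /dep_sup /(_ (circuit_dep c2)); rewrite (maxinI mL).
have Lsub : L \subset (C1 :|: C2) :\ f :\ g.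
  apply/subsetP => x xL; have := subsetP (maxinS mL) _ xL; rewrite !inE => ->; rewrite andbT.
  by apply/andP; split; apply/eqP => E; subst x; [rewrite xL in gL| rewrite xL in fL].
have gf : g != f by apply/eqP => E; subst g; rewrite gC2 in fC2.
have cardL : #|L| < #|(C1 :|: C2) :\ e|.
  apply: (leq_ltn_trans (subset_leq_card Lsub)).
  have h1 := cardsD1 f (C1 :|: C2); have h2 := cardsD1 g ((C1 :|: C2) :\ f).
  have h3 := cardsD1 e (C1 :|: C2).
  have i1 : f \in C1 :|: C2 by rewrite inE fC1.
  have i2 : g \in (C1 :|: C2) :\ f by rewrite 2!inE gf inE gC2 orbT.
  have i3 : e \in C1 :|: C2 by rewrite inE e1.
  rewrite i1 in h1; rewrite i2 in h2; rewrite i3 in h3.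
  rewrite h2 in h1; rewrite h1 in h3; move: h3; rewrite /= !add1n => /eqP; rewrite eqSS => /eqP <-.
  by [].
have [y /setDP[yS yL] Iy] := Iaug (maxinI mL) Id cardL.
have yS' : y \in C1 :|: C2 by move: yS; rewrite !inE => /andP[].
by rewrite (maxin_nogrow mL yS' Iy) in yL.
Qed.


Lemma cardsU_disj A B : [disjoint A & B] -> #|A :|: B| = #|A| + #|B|.
Proof. by move=> d; rewrite cardsU (disjoint_setI0 d) cards0 subn0. Qed.

End Basics.

Lemma dualP (T : finType) (I : {set T} -> bool) (X : {set T}) :
  reflect (exists2 B, is_basis I B & [disjoint X & B]) (dual I X).
Proof.
apply: (iffP existsP) => [[B /andP[b d]] | [B b d]]; first by exists B.
by exists B; rewrite b d.
Qed.

Section Dual.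
Variable T : finType.
Variable I : {set T} -> bool.
Hypothesis HI : is_matroid I.
Implicit Types (A B C D J L N S U X Y : {set T}).

Lemma dual_matroid : is_matroid (dual I).
Proof.
split.
- apply/dualP; have [B bB] := exists_basis HI; exists B => //.
  by rewrite -setI_eq0 set0I.
- move=> A B BA /dualP [B0 b0 d]; apply/dualP; exists B0 => //; exact: disjointWl BA d.
move=> X Y /dualP[BX bX dX] /dualP[BY bY dY] lt.
case: (pickP [pred y in Y :\: X | dual I (y |: X)]) => [y /andP[yYX dy] | none]; first by exists y.
exfalso.
have sB : BY :\: X \subset ~: X by rewrite subDset setUCr subsetT.
have [L mL sL] := maxin_ext (Isub HI (subsetDl BY X) (basisI bY)) sB.
have BXs : BX \subset ~: X by rewrite -disjoints_subset disjoint_sym.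
have bL := maxin_basis HI bX BXs mL.
have LX := maxinS mL.
have YL : Y :\: X \subset L.
  apply/subsetP => y yYX; apply/negPn/negP => yL.
  have := none y; rewrite /= yYX /=; move/negbT/negP; apply; apply/dualP.
  exists L => //; apply/disjP => z; rewrite !inE => /orP[/eqP -> | zX] zL.
    by rewrite zL in yL.
  by move: (subsetP LX z zL); rewrite inE zX.
have dis : [disjoint Y :\: X & BY :\: X].
  apply/disjP => z; rewrite !inE => /andP[_ zY] /andP[_ zB].
  exact: (elimT disjP dY z zY zB).
have c1 : #|Y :\: X| + #|BY :\: X| <= #|L|.
  by rewrite -cardsU_disj //; apply: subset_leq_card; rewrite subUset YL sL.
have c2 : #|BY| = #|L| := basis_card HI bY bL.
have c3 : #|BY :&: X| <= #|X :\: Y|.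
  apply: subset_leq_card; apply/subsetP => z; rewrite !inE => /andP[zB zX]; rewrite zX andbT.
  by apply/negP => zY; apply: (elimT disjP dY z zY zB).
have c4 := cardsD BY X; have c5 := cardsD Y X; have c6 := cardsD X Y.
have c7 : #|BY :&: X| <= #|BY| by apply: subset_leq_card; apply: subsetIl.
have c8 : #|Y :&: X| <= #|Y| by apply: subset_leq_card; apply: subsetIl.
have c9 : #|X :&: Y| <= #|X| by apply: subset_leq_card; apply: subsetIl.
rewrite setIC in c9 c6.
clear -c1 c2 c3 c4 c5 c6 c7 c8 c9 lt.
lia.
Qed.

Lemma compl_basis B : is_basis I B -> is_basis (dual I) (~: B).
Proof.
move=> bB; apply/maxsetP; split.
  by apply/dualP; exists B => //; rewrite disjoints_subset.
move=> Y /dualP[B' b' d'] sY.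
have s1 : B' \subset B.
  apply: (subset_trans _ (_ : ~: Y \subset B)); first by rewrite -disjoints_subset disjoint_sym.
  by rewrite -setCS setCK.
have EB : B' = B.
  by apply/eqP; rewrite eqEcard s1 /=; apply: eq_leq (basis_card HI bB b').
subst B'; apply/eqP; rewrite eqEsubset sY andbT.
by rewrite -disjoints_subset.
Qed.

Lemma dual_basis Bs : is_basis (dual I) Bs -> exists2 B, is_basis I B & Bs = ~: B.
Proof.
move=> bs; have /dualP[B b d] := maxsetp bs.
exists B => //; apply: esym; apply: (maxsetsup bs).
  by apply/dualP; exists B => //; rewrite disjoints_subset.
by rewrite -disjoints_subset.
Qed.

Lemma dual_dual X : dual (dual I) X = I X.
Proof.
apply/idP/idP.
- case/dualP => Bs bs d; have [B bB E] := dual_basis bs; subst Bs.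
  apply: (Isub HI _ (basisI bB)); by move: d; rewrite disjoints_subset setCK.
- move=> IX; have [B bB XB] := basis_ext IX; apply/dualP; exists (~: B).
    exact: compl_basis.
  by rewrite disjoints_subset setCK.
Qed.

Lemma dual_dualE : dual (dual I) = I.
Proof. by apply: FunctionalExtensionality.functional_extensionality => X; apply: dual_dual. Qed.

Lemma orth C D e : is_circuit I C -> is_circuit (dual I) D -> e \in C -> e \in D ->
  exists2 f, f \in C :&: D & f != e.
Proof.
move=> cC cD eC eD.
case: (pickP [pred f in C :&: D | f != e]) => [f /andP[f1 f2] | none]; first by exists f.
exfalso.
have /dualP [B bB dB] := circuit_del cD eD.
have eB : e \in B.
  apply/negPn/negP => eB; move: (circuit_dep cD); apply/negP/negPn; apply/dualP; exists B => //.
  apply/disjP => z zD zB; case: (eqVneq z e) => [E|ze].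
    by subst z; rewrite zB in eB.
  by apply: (elimT disjP dB z _ zB); rewrite !inE ze zD.
have sC : C :\ e \subset ~: D.
  apply/subsetP => z; rewrite !inE => /andP[ze zC]; apply/negP => zD.
  by have := none z; rewrite /= !inE zC zD ze.
have [L mL sL] := maxin_ext (circuit_del cC eC) sC.
have leBL : #|B| <= #|L|.
  rewrite leqNgt; apply/negP => lt.
  have [y /setDP[yB yL] Iy] := Iaug HI (maxinI mL) (basisI bB) lt.
  case: (eqVneq y e) => [ye|ye].
    subst y; move: (circuit_dep cC); apply/negP/negPn; apply: (Isub HI _ Iy).
    apply/subsetP => z zC; rewrite !inE; case: (eqVneq z e) => //= ze.
    by apply: (subsetP sL); rewrite !inE ze.
  have yD : y \in ~: D.
    rewrite inE; apply/negP => yD.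
    by apply: (elimT disjP dB y _ yB); rewrite !inE ye yD.
  by rewrite (maxin_nogrow mL yD Iy) in yL.
have bL := basis_of_card HI bB (maxinI mL) leBL.
move: (circuit_dep cD); apply/negP/negPn; apply/dualP; exists L => //.
by rewrite disjoint_sym disjoints_subset (maxinS mL).
Qed.

Lemma span_card J U : I J ->
  (forall j, j \in J -> j \notin U -> exists2 C, is_circuit I C & (j \in C) && (C \subset j |: U)) ->
  #|J| <= #|U|.
Proof.
move=> IJ H.
have [N mN _] := maxin_ext (I0 HI) (sub0set U).
apply: (leq_trans _ (subset_leq_card (maxinS mN))).
rewrite leqNgt; apply/negP => lt.
have [x /setDP[xJ xN] Ix] := Iaug HI (maxinI mN) IJ lt.
case: (boolP (x \in U)) => xU.
  by rewrite (maxin_nogrow mN xU Ix) in xN.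
have [C cC /andP[xC CU]] := H x xJ xU.
have sC : C :\ x \subset U.
  apply/subsetP => z; rewrite !inE => /andP[zx zC].
  by move: (subsetP CU z zC); rewrite !inE (negbTE zx).
have [N' mN' sN'] := maxin_ext (circuit_del cC xC) sC.
have lt' : #|N'| < #|x |: N|.
  by rewrite cardsU1 xN (maxin_card HI mN' mN).
have [y /setDP[yxN yN'] Iy] := Iaug HI (maxinI mN') Ix lt'.
case: (eqVneq y x) => [yx|yx].
  subst y; move: (circuit_dep cC); apply/negP/negPn; apply: (Isub HI _ Iy).
  apply/subsetP => z zC; rewrite !inE; case: (eqVneq z x) => //= zx.
  by apply: (subsetP sN'); rewrite !inE zx.
have yN : y \in N by move: yxN; rewrite !inE (negbTE yx).
have yU : y \in U := subsetP (maxinS mN) y yN.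
by rewrite (maxin_nogrow mN' yU Iy) in yN'.
Qed.

End Dual.


Lemma card_bigcup_le (T : finType) (J : finType) (P : pred J) (F : J -> {set T}) :
  #|\bigcup_(i | P i) F i| <= \sum_(i | P i) #|F i|.
Proof.
elim/big_rec2: _ => [|i n U _ le]; first by rewrite cards0.
by rewrite (leq_trans (leq_card_setU _ _).1) ?leq_add2l.
Qed.

Definition sunflower (T : finType) (F : {set {set T}}) (K : {set T}) :=
  forall A B, A \in F -> B \in F -> A != B -> A :&: B = K.

Lemma ER s : forall p, exists m, forall (T : finType) (F : {set {set T}}),
  (forall A, A \in F -> #|A| <= s) -> m <= #|F| ->
  exists (F' : {set {set T}}) (K : {set T}), [/\ F' \subset F, p <= #|F'|, sunflower F' K &
     forall A, A \in F' -> K \subset A].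
Proof.
elim: s => [|s IH] p.
  exists 2 => T F HF le.
  have : F \subset [set set0].
    by apply/subsetP => A AF; rewrite inE -cards_eq0 -leqn0 HF.
  by move/subset_leq_card; rewrite cards1; lia.
have [ms Hms] := IH p.
exists (2 + p * s.+1 * ms) => T F HF le.
pose pd (H : {set {set T}}) := (H \subset F) &&
   [forall A in H, forall B in H, (A != B) ==> [disjoint A & B]].
have pd0 : pd set0 by rewrite /pd sub0set; apply/forall_inP => A; rewrite inE.
have [H mH _] := @maxset_exists _ pd set0 pd0.
have /andP[HF' /forall_inP Hd] := maxsetp mH.
case: (leqP p #|H|) => [pH | Hp].
  exists H, set0; split => //.
    move=> A B AH BH AB; apply/eqP; rewrite setI_eq0.
    by move: (Hd A AH) => /forall_inP /(_ B BH) /implyP; apply.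
  by move=> A _; apply: sub0set.
pose W := \bigcup_(A in H) A.
have cW : #|W| <= #|H| * s.+1.
  apply: (leq_trans (card_bigcup_le _ _)).
  rewrite -sum_nat_const; apply: leq_sum => A AH; apply: HF; exact: (subsetP HF').
have meet : forall A, A \in F -> A != set0 -> exists2 w, w \in W & w \in A.
  move=> A AF An0; case: (pickP [pred w in W | w \in A]) => [w /andP[]|none]; first by exists w.
  exfalso.
  have dA : forall B, B \in H -> [disjoint A & B].
    move=> B BH; rewrite -setI_eq0; apply/eqP/setP => x; rewrite !inE.
    apply/negP => /andP[xA xB]; have := none x; rewrite /= xA andbT.
    by move/negbT/negP; apply; apply/bigcupP; exists B.
  have pdA : pd (A |: H).
    rewrite /pd subUset sub1set AF HF' /=; apply/forall_inP => X /setU1P XH.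
    apply/forall_inP => Y /setU1P YH; apply/implyP.
    case: XH => [->|XH]; case: YH => [->|YH] XY.
    - by rewrite -> eqxx in XY.
    - by apply: dA.
    - by rewrite disjoint_sym; apply: dA.
    - by move: (Hd X XH) => /forall_inP /(_ Y YH) /implyP; apply.
  have AH : A \in H by rewrite -(maxsetsup mH pdA (subsetUr _ _)) setU11.
  move: An0; case/set0Pn => x xA; have := none x; rewrite /= xA andbT.
  by move/negbT/negP; apply; apply/bigcupP; exists A.
pose Fw w := [set A in F | w \in A].
have [w wW big] : exists2 w, w \in W & ms <= #|Fw w|.
  case: (pickP [pred w in W | ms <= #|Fw w|]) => [w /andP[]|none]; first by exists w.
  exfalso.
  have c1 : #|F :\ set0| <= \sum_(w in W) #|Fw w|.
    apply: (leq_trans _ (card_bigcup_le _ _)); apply: subset_leq_card.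
    apply/subsetP => A; rewrite !inE => /andP[An0 AF].
    have [x xW xA] := meet A AF An0.
    by apply/bigcupP; exists x => //; rewrite inE AF xA.
  have c2 : \sum_(w in W) #|Fw w| <= #|W| * ms.
    rewrite -sum_nat_const; apply: leq_sum => x xW.
    by have := none x; rewrite /= xW /= => /negbT; rewrite -ltnNge => /ltnW.
  have c3 : #|F| <= 1 + #|F :\ set0| by rewrite (cardsD1 set0 F); case: (_ \in _).
  have c4 : #|W| * ms <= #|H| * s.+1 * ms by apply: leq_mul.
  have c5 : #|H| * s.+1 * ms <= p * s.+1 * ms.
    by apply: leq_mul => //; apply: leq_mul => //; apply: ltnW.
  move: c1 c2 c3 c4 c5 le.
  set X := #|H| * s.+1 * ms; set Z := p * s.+1 * ms; set Wm := #|W| * ms.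
  set a := #|F :\ set0|; set b := \sum_(_ in _) _; set c := #|F|.
  clear; lia.
pose G := [set A :\ w | A in Fw w].
have injG : {in Fw w &, injective (fun A => A :\ w)}.
  move=> A B; rewrite !inE => /andP[_ wA] /andP[_ wB] E.
  by rewrite -(setD1K wA) -(setD1K wB) E.
have cG : ms <= #|G| by rewrite card_in_imset.
have HG : forall A, A \in G -> #|A| <= s.
  move=> A /imsetP[B]; rewrite inE => /andP[BF wB] ->.
  by have := HF B BF; rewrite (cardsD1 w B) wB.
have [F'' [K'' [sF'' pF'' sunF'' KF'']]] := Hms T G HG cG.
have wG : forall A, A \in F'' -> w \notin A.
  move=> A AF; have /imsetP[B _ ->] := subsetP sF'' A AF; by rewrite !inE eqxx.
exists [set w |: A | A in F''], (w |: K''); split.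
- apply/subsetP => X /imsetP[A AF ->].
  have /imsetP[B] := subsetP sF'' A AF; rewrite inE => /andP[BF wB] ->.
  by rewrite setD1K.
- rewrite card_in_imset //.
  move=> A B AF BF E; apply/setP => x.
  move/setP/(_ x): E; rewrite !inE.
  case: (eqVneq x w) => [->|_] //=.
  by rewrite (negbTE (wG A AF)) (negbTE (wG B BF)).
- move=> X Y /imsetP[A AF ->] /imsetP[B BF ->] neq.
  rewrite -setUIr sunF'' //; apply: contraNneq neq => ->//.
- by move=> X /imsetP[A AF ->]; apply: setUS; apply: KF''.
Qed.


Lemma pigeon (T : finType) (G : {set {set T}}) (R : {set T}) (f : {set T} -> {set T}) m :
  (forall D, D \in G -> f D \subset R) -> 2 ^ #|R| * m <= #|G| ->
  exists2 Q : {set T}, Q \subset R & m <= #|[set D in G | f D == Q]|.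
Proof.
move=> Hf le.
case: (pickP [pred Q : {set T} | (Q \in powerset R) && (m <= #|[set D in G | f D == Q]|)]) => [Q /andP[]|none].
  by rewrite inE => QR big; exists Q.
exfalso.
have c1 : #|G| <= \sum_(Q in powerset R) #|[set D in G | f D == Q]|.
  apply: (leq_trans _ (card_bigcup_le _ _)); apply: subset_leq_card.
  apply/subsetP => D DG; apply/bigcupP; exists (f D); first by rewrite inE Hf.
  by rewrite inE DG eqxx.
have c2 : \sum_(Q in powerset R) (#|[set D in G | f D == Q]|).+1 <= #|powerset R| * m.
  rewrite -sum_nat_const; apply: leq_sum => Q QR.
  by have := none Q; rewrite /= QR /= => /negbT; rewrite -ltnNge.
have c3 : \sum_(Q in powerset R) (#|[set D in G | f D == Q]|).+1 =
          \sum_(Q in powerset R) #|[set D in G | f D == Q]| + #|powerset R|.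
  rewrite -sum1_card -big_split /=; apply: eq_bigr => Q _; by rewrite addn1.
have c4 : 0 < #|powerset R| by rewrite card_powerset expn_gt0.
rewrite card_powerset in c2 c3 c4.
move: c1 c2 c3 c4 le; set a := \sum_(_ in _) _; set b := \sum_(_ in _) _.
set c := 2 ^ #|R|; set d := #|G|; clear; nia.
Qed.

Section Pairs.
Variable T : finType.
Variable P : {set T} -> bool.
Hypothesis HP : is_matroid P.
Variables (Fs : {set {set T}}) (K : {set T}) (e : T) (s : nat).
Hypothesis sunF : sunflower Fs K.
Hypothesis eK : e \in K.
Hypothesis HFs : forall C, C \in Fs -> is_circuit P C /\ #|C| <= s.

Lemma pairs n : forall F : {set {set T}}, F \subset Fs -> 2 * n <= #|F| ->
  exists G : {set {set T}}, [/\ n <= #|G|,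
    forall D, D \in G -> [/\ is_circuit P D, e \notin D, #|D| <= 2 * s, ~~ (D \subset K)
                           & D \subset \bigcup_(C in F) C] &
    forall D D', D \in G -> D' \in G -> D != D' -> D :&: D' \subset K].
Proof.
elim: n => [|n IH] F sF le.
  by exists set0; split => // D; rewrite inE.
have /card_gt0P [C1 C1F] : 0 < #|F| by lia.
have /card_gt0P [C2 C2F] : 0 < #|F :\ C1|.
  have h : #|F| = 1 + #|F :\ C1|.
    by have := cardsD1 C1 F; rewrite C1F; exact.
  lia.
have C21 : C2 != C1 by case/setD1P: C2F.
have C2F' : C2 \in F by case/setD1P: C2F.
pose F' := F :\ C1 :\ C2.
have sF' : F' \subset F by apply: (subset_trans (subsetDl _ _) (subsetDl _ _)).
have le' : 2 * n <= #|F'|.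
  have h1 : #|F| = 1 + #|F :\ C1|.
    by have := cardsD1 C1 F; rewrite C1F; exact.
  have h2 : #|F :\ C1| = 1 + #|F'|.
    by have := cardsD1 C2 (F :\ C1); rewrite C2F; exact.
  lia.
have [G' [cG' HG' PG']] := IH F' (subset_trans sF' sF) le'.
have C1s := subsetP sF C1 C1F; have C2s := subsetP sF C2 C2F'.
have [c1 _] := HFs C1s; have [c2 _] := HFs C2s.
have K12 : C1 :&: C2 = K by apply: sunF => //; rewrite eq_sym.
have e1 : e \in C1 by move: eK; rewrite -K12 inE => /andP[].
have e2 : e \in C2 by move: eK; rewrite -K12 inE => /andP[].
have neq12 : C1 != C2 by rewrite eq_sym.
have [D cD sD] := circuit_elim HP c1 c2 neq12 e1 e2.
have key : forall X : {set T}, X \subset C1 :|: C2 -> X \subset \bigcup_(C in F') C -> X \subset K.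
  move=> X X12 XF'; apply/subsetP => x xX.
  have /bigcupP [C CF' xC] := subsetP XF' x xX.
  move: CF'; rewrite !inE => /and3P [CC2 CC1 CF].
  have Cs := subsetP sF C CF.
  have := subsetP X12 x xX; rewrite inE => /orP [xC1 | xC2].
    by rewrite -(sunF C1s Cs) ?inE ?xC1 // eq_sym.
  by rewrite -(sunF C2s Cs) ?inE ?xC2 // eq_sym.
have D12 : D \subset C1 :|: C2 by apply: (subset_trans sD); apply: subsetDl.
have eD : e \notin D by apply/negP => eD; move: (subsetP sD e eD); rewrite !inE eqxx.
have DK : ~~ (D \subset K).
  apply/negP => DK; have DC1 : D \subset C1 by rewrite -K12 in DK; apply: (subset_trans DK); apply: subsetIl.
  by move: eD; rewrite (circuit_incomp cD c1 DC1) e1.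
have DG' : D \notin G'.
  apply/negP => DG'; have [_ _ _ _ DF'] := HG' D DG'.
  by move: DK; rewrite (key D D12 DF').
have subF : \bigcup_(C in F') C \subset \bigcup_(C in F) C.
  apply/subsetP => x /bigcupP [C CF' xC]; apply/bigcupP; exists C => //; exact: (subsetP sF').
exists (D |: G'); split.
- by rewrite cardsU1 DG' add1n ltnS.
- move=> D' /setU1P [->|D'G].
    split => //.
    + have [_ s1] := HFs C1s; have [_ s2] := HFs C2s.
      apply: (leq_trans (subset_leq_card D12)); apply: (leq_trans (leq_card_setU _ _).1).
      by rewrite mul2n -addnn; apply: leq_add.
    + apply: (subset_trans D12); rewrite subUset; apply/andP; split; apply/subsetP => x xC;
        apply/bigcupP; [exists C1 | exists C2] => //.
  have [? ? ? ? h] := HG' D' D'G; split => //; exact: (subset_trans h subF).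
- move=> X Y /setU1P [->|XG] /setU1P [->|YG] XY.
  + by rewrite eqxx in XY.
  + apply: key; first by apply: (subset_trans _ D12); apply: subsetIl.
    by have [_ _ _ _ h] := HG' Y YG; apply: (subset_trans _ h); apply: subsetIr.
  + apply: key; first by apply: (subset_trans _ D12); apply: subsetIr.
    by have [_ _ _ _ h] := HG' X XG; apply: (subset_trans _ h); apply: subsetIl.
  + exact: PG'.
Qed.
End Pairs.

Lemma reduce k : forall s p, exists m S, forall (T : finType) (P : {set T} -> bool),
  is_matroid P -> forall (Fs : {set {set T}}) (K : {set T}), sunflower Fs K -> #|K| <= k ->
  (forall C, C \in Fs -> is_circuit P C /\ #|C| <= s) -> m <= #|Fs| ->
  exists F' : {set {set T}}, [/\ p <= #|F'|,
     (forall D, D \in F' -> is_circuit P D /\ #|D| <= S) &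
     (forall D D', D \in F' -> D' \in F' -> D != D' -> [disjoint D & D'])].
Proof.
have base : forall (T : finType) (P : {set T} -> bool) (Fs : {set {set T}}) p S,
  sunflower Fs set0 -> (forall C, C \in Fs -> is_circuit P C /\ #|C| <= S) -> p <= #|Fs| ->
  exists F' : {set {set T}}, [/\ p <= #|F'|,
     (forall D, D \in F' -> is_circuit P D /\ #|D| <= S) &
     (forall D D', D \in F' -> D' \in F' -> D != D' -> [disjoint D & D'])].
  move=> T P Fs p S sun H le; exists Fs; split => // D D' DF D'F neq.
  by rewrite -setI_eq0 (sun D D' DF D'F neq).
elim: k => [|k IH] s p.
  exists p, s => T P HP Fs K sun cK H le.
  move: cK; rewrite leqn0 cards_eq0 => /eqP K0; subst K.
  exact: (base T P Fs p s sun H le).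
have [mk [Sk Hk]] := IH (2 * s) p.
exists (maxn p (2 * (2 ^ k.+1 * mk))), (maxn s Sk) => T P HP Fs K sun cK H le.
have H' : forall C, C \in Fs -> is_circuit P C /\ #|C| <= maxn s Sk.
  by move=> C CF; have [? ?] := H C CF; split => //; rewrite leq_max; apply/orP; left.
case: (eqVneq K set0) => [K0 | /set0Pn [e eK]].
  subst K; apply: (base T P Fs p (maxn s Sk) sun H'); apply: (leq_trans _ le); exact: leq_maxl.
have [G [cG HG PG]] := pairs HP sun eK H (n := 2 ^ k.+1 * mk) (subxx Fs)
   (leq_trans (leq_maxr _ _) le).
have trG : forall D, D \in G -> D :&: K \subset K :\ e.
  move=> D DG; have [_ eD _ _ _] := HG D DG; apply/subsetP => x; rewrite !inE => /andP[xD xK].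
  by rewrite xK andbT; apply: contraNneq eD => <-.
have cKe : #|K :\ e| <= k by have := cardsD1 e K; rewrite eK /=; lia.
have le2 : 2 ^ #|K :\ e| * mk <= #|G|.
  apply: (leq_trans _ cG); apply: leq_mul => //; rewrite leq_exp2l //; lia.
have [Q QK bigQ] := @pigeon T G (K :\ e) (fun D => D :&: K) mk trG le2.
pose GQ := [set D in G | D :&: K == Q].
have sunQ : sunflower GQ Q.
  move=> D D'; rewrite !inE => /andP[DG /eqP DQ] /andP[D'G /eqP D'Q] neq.
  have := PG D D' DG D'G neq => sub.
  apply/setP => x; apply/idP/idP => [xDD | xQ].
    rewrite -DQ inE (subsetP sub x xDD) andbT.
    by move: xDD; rewrite inE => /andP[].
  have h1 : x \in D :&: K by rewrite DQ.
  have h2 : x \in D' :&: K by rewrite D'Q.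
  rewrite !inE in h1 h2; rewrite inE.
  by case/andP: h1 => -> _; case/andP: h2 => -> _.
have cQ : #|Q| <= k by apply: (leq_trans (subset_leq_card QK)).
have HQ : forall C, C \in GQ -> is_circuit P C /\ #|C| <= 2 * s.
  by move=> C; rewrite inE => /andP[CG _]; have [? ? ? _ _] := HG C CG.
have [F' [pF' HF' dF']] := Hk T P HP GQ Q sunQ cQ HQ bigQ.
exists F'; split => // D DF; have [? ?] := HF' D DF; split => //.
by rewrite leq_max; apply/orP; right.
Qed.


Definition asb (P : Prop) : bool := if excluded_middle_informative P then true else false.
Lemma asbP (P : Prop) : reflect P (asb P).
Proof. by rewrite /asb; case: excluded_middle_informative => h; constructor. Qed.

Section Main.
Variable T : finType.
Variable I : {set T} -> bool.
Hypothesis HI : is_matroid I.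
Variable t : nat.
Hypothesis t0 : 0 < t.
Hypothesis Ht : t2t_property I t.
Variable Cs : 'I_t.-1 -> {set T}.
Hypothesis cCs : forall i, is_circuit (dual I) (Cs i).
Hypothesis dCs : forall i j, i != j -> [disjoint Cs i & Cs j].

Let U := \bigcup_(i < t.-1) Cs i.

Definition good z := exists z', [/\ z' \notin U, z' != z &
  exists x x' : 'I_t.-1 -> T,
    (forall i, [/\ x i \in Cs i, x' i \in Cs i & x i != x' i]) /\
    is_circuit I ([set z; z'] :|: \bigcup_(i < t.-1) [set x i; x' i])].

Lemma good_or_bad z : z \notin U ->
  good z \/ exists2 C, is_circuit I C & (z \in C) && (C \subset z |: U).
Proof.
move=> zU.
have HD := dual_matroid HI.
pose x i := odflt z [pick y in Cs i].
have xin : forall i, x i \in Cs i.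
  move=> i; rewrite /x; case: pickP => [y //|none].
  have := circuit_neq0 HD (cCs i); case/set0Pn => y yC.
  by have := none y; rewrite yC.
have xU : forall i, x i \in U by move=> i; apply/bigcupP; exists i.
have xinj : injective x.
  move=> i j E; apply/eqP; apply/negPn/negP => ij.
  by apply: (elimT disjP (dCs ij) (x i) (xin i)); rewrite E xin.
pose X := z |: [set x i | i : 'I_t.-1].
have cX : #|X| = t.
  rewrite cardsU1 card_imset // card_ord.
  have -> : z \notin [set x i | i : 'I_t.-1].
    by apply/negP => /imsetP [i _ E]; move: zU; rewrite E xU.
  by rewrite add1n prednK.
have [[C cC /andP [XC /eqP cardC]] _] := Ht cX.
have zC : z \in C by apply: (subsetP XC); rewrite setU11.
have xC : forall i, x i \in C.
  by move=> i; apply: (subsetP XC); rewrite setU1r // imset_f.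
pose x' i := odflt (x i) [pick f in C :&: Cs i | f != x i].
have x'P : forall i, [/\ x' i \in C, x' i \in Cs i & x i != x' i].
  move=> i; rewrite /x'; case: pickP => [f /andP [fCC fx] | none].
    by move: fCC; rewrite inE => /andP [-> ->]; rewrite eq_sym fx.
  have [f fCC fx] := orth HI cC (cCs i) (xC i) (xin i).
  by have := none f; rewrite /= fCC fx.
case: (pickP [pred w in C | (w \notin U) && (w != z)]) => [w /andP [wC /andP [wU wz]] | none].
  left; exists w; split => //; exists x, x'; split.
    by move=> i; have [_ ? ?] := x'P i; split.
  pose W := \bigcup_(i < t.-1) [set x i; x' i].
  have WU : W \subset U.
    apply/subsetP => y /bigcupP [i _]; rewrite !inE => /orP [/eqP -> | /eqP ->].
      exact: xU.
    by apply/bigcupP; exists i => //; have [_ ? _] := x'P i.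
  have sub2 : forall i, [set x i; x' i] \subset Cs i.
    move=> i; apply/subsetP => y; rewrite !inE => /orP [/eqP -> | /eqP ->]; first exact: xin.
    by have [_ ? _] := x'P i.
  have dW : forall i j, i != j -> [disjoint [set x i; x' i] & [set x j; x' j]].
    move=> i j ij; apply: (disjointW (sub2 i) (sub2 j) (dCs ij)).
  have cW : #|W| = 2 * t.-1.
    have := partition_disjoint_bigcup addn (fun _ => 1) dW; rewrite !sum1_card => ->.
    rewrite (eq_bigr (fun _ => 2)); first by rewrite sum_nat_const card_ord mulnC.
    by move=> i _; rewrite sum1_card cards2; have [_ _ ->] := x'P i.
  have dzw : [disjoint [set z; w] & W].
    apply/disjP => y; rewrite !inE => /orP [/eqP -> | /eqP ->] yW.
      by move: zU; rewrite (subsetP WU _ yW).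
    by move: wU; rewrite (subsetP WU _ yW).
  have E : [set z; w] :|: W = C.
    apply/eqP; rewrite eqEcard; apply/andP; split.
      rewrite !subUset !sub1set zC wC /=; apply/bigcupsP => i _.
      by rewrite subUset !sub1set xC; have [-> _ _] := x'P i.
    have h : #|[set z; w] :|: W| = 2 + 2 * t.-1.
      by rewrite cardsU_disj // cards2 eq_sym wz cW.
    by rewrite h cardC; apply: eq_leq; rewrite -{1}(prednK t0) mulnS.
  by rewrite E.
right; exists C => //; rewrite zC /=; apply/subsetP => y yC.
rewrite !inE; case: (eqVneq y z) => //= yz.
by have := none y; rewrite /= yC yz andbT => /negbT; rewrite negbK.
Qed.

Lemma main_generic B q : is_basis I B -> q + #|U| <= #|B| ->
  exists Z : {set T}, [disjoint Z & U] /\ q <= rank I Z /\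
    (forall z, z \in Z -> exists z', [/\ z' \in Z, z' != z &
       exists x x' : 'I_t.-1 -> T,
         (forall i, [/\ x i \in Cs i, x' i \in Cs i & x i != x' i]) /\
         is_circuit I ([set z; z'] :|: \bigcup_(i < t.-1) [set x i; x' i])]).
Proof.
move=> bB le.
pose Z := [set z | (z \notin U) && asb (good z)].
exists Z; split; [|split].
- apply/disjP => z; rewrite inE => /andP [zU _] zU'; by rewrite zU' in zU.
- pose J := B :\: Z.
  have IJ : I J := Isub HI (subsetDl B Z) (basisI bB).
  have cJ : #|J| <= #|U|.
    apply: (span_card HI IJ) => j jJ jU.
    have jZ : j \notin Z by move: jJ; rewrite inE => /andP [].
    case: (good_or_bad jU) => [g | //]; exfalso.
    by move: jZ; rewrite inE jU /=; move/asbP.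
  have IBZ : I (B :&: Z) := Isub HI (subsetIl B Z) (basisI bB).
  have r1 : #|B :&: Z| <= rank I Z.
    rewrite /rank; apply: leq_bigmax_cond.
    by rewrite subsetIr IBZ.
  have r2 : #|B :&: Z| + #|J| = #|B| by have := cardsID Z B; exact.
  lia.
- move=> z; rewrite inE => /andP [zU /asbP [z' [z'U z'z [x [x' [Hx Hc]]]]]].
  exists z'; split => //; first last.
    by exists x, x'.
  rewrite inE z'U /=; apply/asbP; exists z; split => //; first by rewrite eq_sym.
  exists x, x'; split => //.
  by have -> : [set z'; z] = [set z; z'] by rewrite setUC.
Qed.

End Main.


Lemma exists_sub_card (T : finType) (A : {set T}) n :
  n <= #|A| -> exists2 X : {set T}, X \subset A & #|X| = n.
Proof.
elim: n => [|n IH] le; first by exists set0; rewrite ?sub0set ?cards0.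
have [X XA cX] := IH (ltnW le).
case: (pickP [pred a in A | a \notin X]) => [a /andP [aA aX] | none].
  exists (a |: X); first by rewrite subUset sub1set aA XA.
  by rewrite cardsU1 aX cX.
exfalso; have : A \subset X.
  by apply/subsetP => a aA; have := none a; rewrite /= aA /= => /negbT; rewrite negbK.
by move/subset_leq_card; rewrite cX; lia.
Qed.

Lemma disj_cocircuits t : exists N S, forall (T : finType) (I : {set T} -> bool),
  is_matroid I -> t2t_property I t -> 0 < t -> N <= #|T| ->
  exists Cs : 'I_t.-1 -> {set T},
    [/\ forall i, is_circuit (dual I) (Cs i),
        forall i j, i != j -> [disjoint Cs i & Cs j] &
        #|\bigcup_(i < t.-1) Cs i| <= t.-1 * S].
Proof.
have [mR [SR HR]] := reduce (2 * t) (2 * t) t.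
have [mE HE] := ER (2 * t) (maxn mR 2).
exists (maxn t (2 * t * mE)), SR => T I HI Ht t0 le.
have HD := dual_matroid HI.
pose F := [set D : {set T} | is_circuit (dual I) D && (#|D| == 2 * t)].
have cover : forall x : T, exists2 D, D \in F & x \in D.
  move=> x.
  have le1 : t.-1 <= #|[set~ x]|.
    have h : #|[set~ x]| = #|T|.-1 by apply: cardsC1.
    rewrite h; have := leq_maxl t (2 * t * mE); lia.
  have [X' X'x cX'] := exists_sub_card le1.
  have cX : #|x |: X'| = t.
    have xX' : x \notin X' by apply/negP => /(subsetP X'x); rewrite !inE eqxx.
    by rewrite cardsU1 xX' cX' add1n prednK.
  have [_ [D cD /andP [XD /eqP cardD]]] := Ht _ cX.
  exists D; first by rewrite inE; apply/andP; split; [exact: cD | rewrite cardD].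

  by apply: (subsetP XD); rewrite setU11.
have cF : #|T| <= #|F| * (2 * t).
  have h1 : #|[set: T]| <= #|\bigcup_(D in F) D|.
    apply: subset_leq_card; apply/subsetP => x _.
    by have [D DF xD] := cover x; apply/bigcupP; exists D.
  have h2 : #|\bigcup_(D in F) D| <= \sum_(D in F) #|D| by apply: card_bigcup_le.
  have h3 : \sum_(D in F) #|D| = #|F| * (2 * t).
    rewrite -sum_nat_const; apply: eq_bigr => D; by rewrite inE => /andP [_ /eqP].
  have h4 : #|[set: T]| = #|T| by apply: cardsT.
  lia.
have mEF : mE <= #|F|.
  have h : 2 * t * mE <= #|T| by apply: leq_trans le; apply: leq_maxr.
  rewrite -(leq_pmul2l (_ : 0 < 2 * t)); last by lia.
  rewrite mulnC in cF; exact: leq_trans h cF.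
have HF : forall A, A \in F -> #|A| <= 2 * t.
  by move=> A; rewrite inE => /andP [_ /eqP ->].
have [F' [K [sF' pF' sunF' KF']]] := HE T F HF mEF.
have /card_gt0P [A0 A0F'] : 0 < #|F'|.
  by apply: leq_trans pF'; rewrite leq_max; apply/orP; right.
have cK : #|K| <= 2 * t.
  apply: (leq_trans (subset_leq_card (KF' A0 A0F'))); apply: HF; exact: (subsetP sF').
have HF' : forall C, C \in F' -> is_circuit (dual I) C /\ #|C| <= 2 * t.
  move=> C CF'; have := subsetP sF' C CF'; rewrite inE => /andP [cC /eqP ->]; by split.
have mRF' : mR <= #|F'| by apply: leq_trans pF'; apply: leq_maxl.
have [F'' [pF'' HF'' dF'']] := HR T (dual I) HD F' K sunF' cK HF' mRF'.
pose Cs (i : 'I_t.-1) := nth set0 (enum F'') i.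
have sz : forall i : 'I_t.-1, i < size (enum F'').
  move=> i; rewrite -cardE; apply: leq_trans pF''.
  by apply: (leq_trans (ltn_ord i)); rewrite leq_pred.
have CsF : forall i, Cs i \in F'' by move=> i; rewrite -mem_enum; apply: mem_nth.
exists Cs; split.
- by move=> i; have [] := HF'' _ (CsF i).
- move=> i j ij; apply: dF''; rewrite ?CsF //.
  by rewrite /Cs nth_uniq ?enum_uniq ?sz.
- apply: (leq_trans (card_bigcup_le _ _)).
  have -> : t.-1 * SR = \sum_(i < t.-1) SR by rewrite sum_nat_const card_ord.
  by apply: leq_sum => i _; have [] := HF'' _ (CsF i).
Qed.


Lemma finish (T : finType) (I : {set T} -> bool) t q S B :
  is_matroid I -> t2t_property I t -> 0 < t -> is_basis I B ->
  q + t.-1 * S <= #|B| ->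
  (exists Cs : 'I_t.-1 -> {set T},
    [/\ forall i, is_circuit (dual I) (Cs i),
        forall i j, i != j -> [disjoint Cs i & Cs j] &
        #|\bigcup_(i < t.-1) Cs i| <= t.-1 * S]) ->
      exists Cs : 'I_t.-1 -> {set T},
        (forall i, is_cocircuit I (Cs i)) /\
        (forall i j, i != j -> [disjoint Cs i & Cs j]) /\
        exists Z : {set T},
          [disjoint Z & \bigcup_(i < t.-1) Cs i] /\
          q <= rank I Z /\
          (forall z, z \in Z ->
             exists z', [/\ z' \in Z, z' != z &
               exists x x' : 'I_t.-1 -> T,
                 (forall i, [/\ x i \in Cs i, x' i \in Cs i & x i != x' i]) /\
                 is_circuit I ([set z; z'] :|: \bigcup_(i < t.-1) [set x i; x' i])]).
Proof.
move=> HI Ht t0 bB le [Cs [cCs dCs cU]].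
exists Cs; split => //; split => //.
apply: (main_generic HI t0 Ht cCs dCs bB).
by apply: leq_trans le; rewrite leq_add2l.
Qed.

Theorem lemma5p5 :
  exists g : nat -> nat -> nat,
  forall (t q : nat), 0 < t -> 0 < q ->
  forall (T : finType) (I : {set T} -> bool),
    is_matroid I -> t2t_property I t -> g t q <= #|T| ->
    exists I' : {set T} -> bool,
      (I' = I \/ I' = dual I) /\
      exists Cs : 'I_t.-1 -> {set T},
        (forall i, is_cocircuit I' (Cs i)) /\
        (forall i j, i != j -> [disjoint Cs i & Cs j]) /\
        exists Z : {set T},
          [disjoint Z & \bigcup_(i < t.-1) Cs i] /\
          q <= rank I' Z /\
          (forall z, z \in Z ->
             exists z', [/\ z' \in Z, z' != z &
               exists x x' : 'I_t.-1 -> T,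
                 (forall i, [/\ x i \in Cs i, x' i \in Cs i & x i != x' i]) /\
                 is_circuit I' ([set z; z'] :|: \bigcup_(i < t.-1) [set x i; x' i])]).
Proof.
pose NS t := constructive_indefinite_description _ (disj_cocircuits t).
pose SS t := constructive_indefinite_description _ (proj2_sig (NS t)).
exists (fun t q => maxn (proj1_sig (NS t)) (2 * (q + t.-1 * proj1_sig (SS t)))).
move=> t q t0 q0 T I HI Ht le.
have HS := proj2_sig (SS t).
move: le (HS); set N := proj1_sig (NS t); set S := proj1_sig (SS t) => le {}HS.
have leN : N <= #|T| by apply: leq_trans le; apply: leq_maxl.
have leS : 2 * (q + t.-1 * S) <= #|T| by apply: leq_trans le; apply: leq_maxr.
have [B bB] := exists_basis HI.
case: (leqP #|T| (2 * #|B|)) => hB.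
  exists I; split; first by left.
  apply: (finish HI Ht t0 bB); last exact: HS.
  by rewrite -(leq_pmul2l (_ : 0 < 2)) //; apply: leq_trans leS hB.
exists (dual I); split; first by right.
have HD := dual_matroid HI.
have Ht' : t2t_property (dual I) t.
  move=> X cX; have [[C1 c1 h1] [C2 c2 h2]] := Ht X cX; split.
    by exists C2.
  by exists C1 => //; rewrite /is_cocircuit dual_dualE.
have bB' := compl_basis HI bB.
apply: (finish HD Ht' t0 bB'); last exact: HS.
have hc : #|B| + #|~: B| = #|T| by apply: cardsC.
lia.
Qed.
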